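(* Let $X$ be a continuous vector field on $\mathbb{S}^1$ of finite width, and let $\lambda^\pm$ be the infinitesimal earthquake measure of $\mathcal{E}_X^\pm$. Then $\lVert\lambda^\pm\rVert_{\mathrm{Th}}\le\frac{2\sqrt2}{1-\tanh(1)}w(X)$.
   Context: $\mathbb{R}^{1,2}$ is $\mathbb{R}^3$ with $\langle x,y\rangle=-x_0y_0+x_1y_1+x_2y_2$; $\mathbb{H}^2$ is identified with the Klein disk $\mathbb{D}^2$ via $\Pi(x_0,x_1,x_2)=(x_1/x_0,x_2/x_0)$, boundary $\mathbb{S}^1$. A vector field $X$ on $\mathbb{S}^1$ is $X(z)=iz\phi_X(z)$. $\phi_X^-(\eta)=\sup\{a(\eta):a\text{ affine},a|_{\mathbb{S}^1}\le\phi_X\}$, $\phi_X^+(\eta)=\inf\{a(\eta):a\text{ affine},a|_{\mathbb{S}^1}\ge\phi_X\}$, $\eta\in\overline{\mathbb{D}^2}$. Width $w(X)=\sup_{\eta\in\mathbb{D}^2}\frac{\phi_X^+(\eta)-\phi_X^-(\eta)}{\sqrt{1-|\eta|^2}}$. $\Sigma^-(\eta)$ is the set of $\sigma\in\mathbb{R}^{1,2}$ with $\langle(1,\xi),\sigma\rangle\le\phi_X^-(\xi)$ for all $\xi\in\mathbb{D}^2$ and equality at $\eta$; $\Sigma^+(\eta)$ likewise with $\ge\phi_X^+$. $\mathcal{E}_X^\pm(\eta)=\mathrm{d}_{(1,\eta)}\Pi((1,\eta)\boxtimes\sigma^\pm(\eta))$, where $\langle x\boxtimes y,v\rangle=\det(x,y,v)$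 and $\sigma^\pm(\eta)$ is the single point or the midpoint of the segment $\Sigma^\pm(\eta)$; these are the left/right infinitesimal earthquakes extending $X$. Their geodesic laminations $\lambda^\pm$ are the connected components of $S^\pm(\sigma)\setminus\mathrm{Int}S^\pm(\sigma)$, $S^\pm(\sigma)=\{\eta\in\mathbb{D}^2:\phi^\pm_X(\eta)=\langle(1,\eta),\sigma\rangle\}$, over all $\sigma$ lying in some $\Sigma^\pm(\eta)$. The infinitesimal earthquake (bending) measure: for an arc $c:[0,1]\to\mathbb{D}^2$, $\lambda^\pm(c)=\inf\sum_{i=0}^{n-1}\sqrt{\langle\sigma_i-\sigma_{i+1},\sigma_i-\sigma_{i+1}\rangle}$ over $0=t_0<\dots<t_n=1$ and $\sigma_i\in\Sigma^\pm(c(t_i))$. Thurston norm $\lVert\lambda\rVert_{\mathrm{Th}}=\sup_I\lambda(I)$ over geodesic segments $I$ of hyperbolic length $1$ transverse to the support of $\lambda$. *)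

(* Defs.v *)
From HB Require Import structures.
From mathcomp Require Import all_boot all_order all_algebra.
From mathcomp Require Import all_classical all_reals all_analysis.
Set Implicit Arguments. Unset Strict Implicit. Unset Printing Implicit Defensive.
Import Order.TTheory GRing.Theory Num.Theory.
Import numFieldNormedType.Exports.
Local Open Scope classical_set_scope.
Local Open Scope ring_scope.

Section Defs.
Variable R : realType.

Definition sqn (p : R * R) : R := p.1 ^+ 2 + p.2 ^+ 2.
Definition on_circle (z : R * R) : Prop := sqn z = 1.
Definition in_disk (p : R * R) : Prop := sqn p < 1.

(* A vector field X(z) = i z phi(z) on S^1 is encoded by phi : R*R -> R;
   only its values on S^1 matter. *)

Definition aff (c b1 b2 : R) (p : R * R) : R := c + b1 * p.1 + b2 * p.2.

Definition phi_minus (phi : R * R -> R) (eta : R * R) : R :=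
  sup [set y | exists c b1 b2,
        (forall z, on_circle z -> aff c b1 b2 z <= phi z) /\ y = aff c b1 b2 eta].

Definition phi_plus (phi : R * R -> R) (eta : R * R) : R :=
  inf [set y | exists c b1 b2,
        (forall z, on_circle z -> phi z <= aff c b1 b2 z) /\ y = aff c b1 b2 eta].

Definition phi_pm (pm : bool) phi := if pm then phi_plus phi else phi_minus phi.

Definition width (phi : R * R -> R) : \bar R :=
  ereal_sup [set ((phi_plus phi eta - phi_minus phi eta)
                   / Num.sqrt (1 - sqn eta))%:E | eta in in_disk].

Definition mink (x y : R * R * R) : R :=
  - (x.1.1 * y.1.1) + x.1.2 * y.1.2 + x.2 * y.2.
Definition sub3 (x y : R * R * R) : R * R * R :=
  (x.1.1 - y.1.1, x.1.2 - y.1.2, x.2 - y.2).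
Definition lift (p : R * R) : R * R * R := (1, p.1, p.2).

Definition Sigma (pm : bool) (phi : R * R -> R) (eta : R * R) : set (R * R * R) :=
  [set s | (forall xi, in_disk xi ->
              if pm then phi_plus phi xi <= mink (lift xi) s
              else mink (lift xi) s <= phi_minus phi xi)
           /\ mink (lift eta) s = phi_pm pm phi eta].

Definition eq_measure (pm : bool) (phi : R * R -> R) (c : R -> R * R) : \bar R :=
  ereal_inf [set x | exists (n : nat) (t : nat -> R) (s : nat -> R * R * R),
     [/\ t 0%N = 0, t n = 1,
         (forall i, (i < n)%N -> t i < t i.+1),
         (forall i, (i <= n)%N -> Sigma pm phi (c (t i)) (s i)) &
         x = (\sum_(i < n) Num.sqrt (mink (sub3 (s i) (s i.+1))
                                         (sub3 (s i) (s i.+1))))%:E]].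

Definition Sset (pm : bool) (phi : R * R -> R) (s : R * R * R) : set (R * R) :=
  [set eta | in_disk eta /\ phi_pm pm phi eta = mink (lift eta) s].

Definition leaf (pm : bool) (phi : R * R -> R) (L : set (R * R)) : Prop :=
  exists s eta0 x, in_disk eta0 /\ Sigma pm phi eta0 s /\
    (Sset pm phi s `\` interior (Sset pm phi s)) x /\
    L = connected_component (Sset pm phi s `\` interior (Sset pm phi s)) x.

(* Euclidean segments = geodesic segments of the Klein model *)
Definition lin (p q : R * R) (t : R) : R * R :=
  ((1 - t) * p.1 + t * q.1, (1 - t) * p.2 + t * q.2).
Definition seg (p q : R * R) : set (R * R) := lin p q @` `[0, 1].

Definition cosh1 : R := (expR 1 + expR (-1)) / 2.
Definition tanh1 : R := (expR 1 - expR (-1)) / (expR 1 + expR (-1)).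

(* hyperbolic (Klein) distance between p and q equals 1:
   cosh d(p,q) = (1 - p.q) / sqrt((1-|p|^2)(1-|q|^2)) *)
Definition hyp_dist_one (p q : R * R) : Prop :=
  (1 - (p.1 * q.1 + p.2 * q.2)) / Num.sqrt ((1 - sqn p) * (1 - sqn q)) = cosh1.

Definition transverse (pm : bool) phi (I : set (R * R)) : Prop :=
  forall L, leaf pm phi L -> forall x y, I x -> I y -> L x -> L y -> x = y.

Definition thurston_norm (pm : bool) (phi : R * R -> R) : \bar R :=
  ereal_sup [set x | exists p q,
     [/\ in_disk p, in_disk q, hyp_dist_one p q, transverse pm phi (seg p q)
       & x = eq_measure pm phi (lin p q)]].

End Defs.

(* Main.v *)
Require Import Defs.
From HB Require Import structures.
From mathcomp Require Import all_boot all_order all_algebra.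
From mathcomp Require Import all_classical all_reals all_analysis.
From mathcomp Require Import ring lra.
Import Order.TTheory GRing.Theory Num.Theory.
Import numFieldNormedType.Exports.
Local Open Scope classical_set_scope.
Local Open Scope ring_scope.
Section Num.
Variable R : realType.

Lemma e_bounds : 64/25 <= expR (1:R) /\ expR (1:R) <= 3.
Proof.
have h8 : expR (1:R) = ((expR (1/8) * expR (1/8)) * (expR (1/8) * expR (1/8)))
   * ((expR (1/8) * expR (1/8)) * (expR (1/8) * expR (1/8))).
  by rewrite -!expRD; congr expR; field.
have l : 1 + 1/8 <= expR (1/8 : R) by exact: expR_ge1Dx.
have l2 : 1 + -(1/8) <= expR (-(1/8) : R) by exact: expR_ge1Dx.
rewrite expRN in l2.
have p := expR_gt0 (1/8 : R).
have u : expR (1/8 : R) <= 8/7.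
  rewrite -(@ler_pM2r _ (expR (1/8))^-1) ?invr_gt0 // mulfV ?gt_eqF //.
  lra.
rewrite h8; set h := expR (1/8) in l u p *.
have al : 81/64 <= h * h by nra.
have au : h * h <= 64/49 by nra.
set a := h * h in al au *.
have bl : 8/5 <= a * a by nra.
have bu : a * a <= 171/100 by nra.
set b := a * a in bl bu *.
split; nra.
Qed.

Lemma cosh1_le : cosh1 R <= 9/5.
Proof.
have [l u] := e_bounds.
rewrite /cosh1 expRN.
set E := expR 1 in l u *.
have E0 : 0 < E by exact: expR_gt0.
have : E^-1 <= 1/2.
  rewrite -(@ler_pM2r _ E) // mulVf ?gt_eqF //; lra.
lra.
Qed.

Lemma K_ge : 43/6 <= 2 * Num.sqrt 2 / (1 - tanh1 R).
Proof.
have [l u] := e_bounds.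
rewrite /tanh1 expRN.
set E := expR 1 in l u *.
have E0 : 0 < E by exact: expR_gt0.
have -> : 1 - (E - E^-1) / (E + E^-1) = 2 / (E^+2 + 1).
  have := sqr_ge0 E => sq.
  by field; apply/andP; split; rewrite gt_eqF //; lra.
have s2 : 1 <= Num.sqrt (2:R).
  by rewrite -[X in X <= _]sqrtr1 ler_sqrt //; lra.
rewrite invf_div mulrA.
have -> : 2 * Num.sqrt 2 * (E ^+ 2 + 1) / 2 = Num.sqrt 2 * (E ^+ 2 + 1) by field.
have e2 : 37/6 <= E ^+ 2.
  have : 64/25 * (64/25) <= E * E by apply: ler_pM => //; lra.
  rewrite expr2; lra.
apply: (le_trans (y := 1 * (E ^+ 2 + 1))); first lra.
apply: ler_wpM2r => //; lra.
Qed.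
End Num.
Section Alg.
Variable R : realType.
Implicit Types a b c P Q X Y Z : R * R * R.

Definition add3 a b : R * R * R := (a.1.1 + b.1.1, a.1.2 + b.1.2, a.2 + b.2).
Definition sc3 (k : R) a : R * R * R := (k * a.1.1, k * a.1.2, k * a.2).

Lemma minkC a b : mink a b = mink b a.
Proof. rewrite /mink; ring. Qed.
Lemma minkDl a b c : mink (add3 a b) c = mink a c + mink b c.
Proof. rewrite /mink /add3 /=; ring. Qed.
Lemma minkDr a b c : mink c (add3 a b) = mink c a + mink c b.
Proof. rewrite /mink /add3 /=; ring. Qed.
Lemma minkZl k a c : mink (sc3 k a) c = k * mink a c.
Proof. rewrite /mink /sc3 /=; ring. Qed.
Lemma minkZr k a c : mink c (sc3 k a) = k * mink c a.
Proof. rewrite /mink /sc3 /=; ring. Qed.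
Lemma minkBl a b c : mink (sub3 a b) c = mink a c - mink b c.
Proof. rewrite /mink /sub3 /=; ring. Qed.
Lemma minkBr a b c : mink c (sub3 a b) = mink c a - mink c b.
Proof. rewrite /mink /sub3 /=; ring. Qed.

Lemma add3_subK X P : add3 X (sub3 P X) = P.
Proof. by case: X => [[? ?] ?]; case: P => [[? ?] ?]; rewrite /add3 /sub3 /=; congr (_, _, _); ring. Qed.

Lemma future Z P : mink Z Z < 0 -> mink Z P < 0 -> 0 < P.1.1 -> mink P P < 0 ->
  0 < Z.1.1.
Proof.
case: Z => [[z0 z1] z2]; case: P => [[p0 p1] p2]; rewrite /mink /= => hz hzp hp0 hp.
rewrite ltNge; apply/negP => hz0.
have cs : (z1 * p1 + z2 * p2) ^+ 2 <= (z1 ^+ 2 + z2 ^+ 2) * (p1 ^+ 2 + p2 ^+ 2).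
  have := sqr_ge0 (z1 * p2 - z2 * p1); rewrite !expr2 => h; nra.
have h1 : (z1 ^+ 2 + z2 ^+ 2) * (p1 ^+ 2 + p2 ^+ 2) <= z0 ^+ 2 * p0 ^+ 2.
  rewrite !expr2; apply: ler_pM; nra.
have h2 : z1 * p1 + z2 * p2 < z0 * p0 by lra.
have h3 : z0 * p0 <= 0 by nra.
have : (z0 * p0) ^+ 2 < (z1 * p1 + z2 * p2) ^+ 2.
  rewrite !expr2; nra.
rewrite exprMn; lra.
Qed.

Lemma final_alg (W C1 : R) P Q (t : R * R * R) :
  C1 <= 9/5 -> 0 <= W -> 0 < P.1.1 -> 0 < Q.1.1 ->
  mink P P = -1 -> mink Q Q = -1 -> mink P Q = - C1 ->
  (forall X Y, 0 < X.1.1 -> mink X X < 0 -> 0 < Y.1.1 -> mink Y Y < 0 ->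
     add3 X Y = P -> - W <= mink X t) ->
  (forall X Y, 0 < X.1.1 -> mink X X < 0 -> 0 < Y.1.1 -> mink Y Y < 0 ->
     add3 X Y = Q -> mink X t <= W) ->
  Num.sqrt (mink t t) <= 43/6 * W.
Proof.
move=> hC hW hP0 hQ0 hPP hQQ hPQ lo up.
have hQP : mink Q P = - C1 by rewrite minkC.
pose X1 := sc3 (3/10) Q; pose Y1 := sub3 P X1.
have hb : - W <= 3/10 * mink Q t.
  rewrite -minkZl; apply: (lo X1 Y1).
  - by rewrite /X1 /sc3 /=; apply: mulr_gt0.
  - by rewrite /X1 minkZl minkZr hQQ; lra.
  - apply: (future _ P); rewrite /Y1 /X1 ?minkBl ?minkBr ?minkZl ?minkZr ?hPP ?hQQ ?hPQ ?hQP ?(minkC P Q) ?hPQ //; lra.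
  - rewrite /Y1 /X1 ?minkBl ?minkBr ?minkZl ?minkZr ?hPP ?hQQ ?hPQ ?hQP ?(minkC P Q) ?hPQ //; lra.
  - exact: add3_subK.
set b := - mink Q t.
have hbW : b <= 10/3 * W by rewrite /b; lra.
have [tt0|tt0] := lerP (mink t t) 0.
  by rewrite (eqP (_ : Num.sqrt _ == 0)) ?sqrtr_eq0 //; lra.
pose v := sub3 t (sc3 b Q).
have vQ : mink v Q = 0 by rewrite /v minkBl minkZl hQQ minkC /b; ring.
have vv : mink v v = mink t t + b ^+ 2.
  by rewrite /v /b !minkBl !minkBr !minkZl !minkZr hQQ (minkC Q t); ring.
have vt : mink v t = mink v v.
  by rewrite /v /b !minkBl !minkBr !minkZl !minkZr hQQ (minkC Q t); ring.
have N2pos : 0 < mink v v by rewrite vv; have := sqr_ge0 b; lra.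
set N := Num.sqrt (mink v v).
have N0 : 0 < N by rewrite sqrtr_gt0.
have NN : N ^+ 2 = mink v v by rewrite sqr_sqrtr // ltW.
pose u := sc3 N^-1 v.
pose X := add3 (sc3 (5/3) Q) (sc3 (4/3) u).
have uQ : mink u Q = 0 by rewrite /u minkZl vQ mulr0.
have uu : mink u u = 1.
  by rewrite /u minkZl minkZr -NN; field; rewrite gt_eqF.
have ut : mink u t = N.
  by rewrite /u minkZl vt -NN; field; rewrite gt_eqF.
clearbody u.
have XX : mink X X = -1.
  by rewrite /X !minkDl !minkDr !minkZl !minkZr uu hQQ uQ (minkC Q u) uQ; field.
have XQ : mink X Q = - (5/3).
  by rewrite /X !minkDl !minkZl uQ hQQ; field.
have Xt : mink X t = - (5/3) * b + 4/3 * N.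
  by rewrite /X !minkDl !minkZl ut /b; field.
clearbody X.
pose X2 := sc3 (1/4) X; pose Y2 := sub3 Q X2.
have hup : 1/4 * mink X t <= W.
  rewrite -minkZl; apply: (up X2 Y2).
  - apply: (future _ Q); rewrite /X2 ?minkZl ?minkZr ?XX ?XQ ?hQQ //; lra.
  - by rewrite /X2 minkZl minkZr XX; lra.
  - apply: (future _ Q); rewrite /Y2 /X2 ?minkBl ?minkBr ?minkZl ?minkZr ?XX ?XQ ?hQQ ?(minkC Q X) ?XQ //; lra.
  - rewrite /Y2 /X2 ?minkBl ?minkBr ?minkZl ?minkZr ?XX ?XQ ?hQQ ?(minkC Q X) ?XQ //; lra.
  - exact: add3_subK.
have hN : N <= 43/6 * W by rewrite Xt in hup; lra.
apply: le_trans hN; rewrite /N ler_sqrt; last exact: ltW.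
by rewrite vv; have := sqr_ge0 b; lra.
Qed.

Definition sd (p : R * R) : R := Num.sqrt (1 - sqn p).
Definition Ph (p : R * R) : R * R * R := ((sd p)^-1, p.1 / sd p, p.2 / sd p).

Lemma sd_gt0 p : in_disk p -> 0 < sd p.
Proof. by rewrite /in_disk /sd sqrtr_gt0 subr_gt0. Qed.

Lemma sd_sq p : in_disk p -> sd p ^+ 2 = 1 - sqn p.
Proof. by move=> h; rewrite /sd sqr_sqrtr // subr_ge0 ltW. Qed.

Lemma Ph0 p : in_disk p -> 0 < (Ph p).1.1.
Proof. by move=> h; rewrite /Ph /= invr_gt0 sd_gt0. Qed.

Lemma PhPh p : in_disk p -> mink (Ph p) (Ph p) = -1.
Proof.
move=> h; have s0 := sd_gt0 _ h; have s2 := sd_sq _ h.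
rewrite /Ph /mink /=; move: s2 s0; rewrite /sqn.
set s := sd p; case: p {h} s => p1 p2 /= s s2 s0.
have e : p1 ^+ 2 + p2 ^+ 2 = 1 - s ^+ 2 by rewrite s2; ring.
have -> : - (s^-1 * s^-1) + p1 / s * (p1 / s) + p2 / s * (p2 / s)
   = (-1 + (p1 ^+ 2 + p2 ^+ 2)) / s ^+ 2 by field; rewrite gt_eqF.
by rewrite e; field; rewrite gt_eqF.
Qed.

Lemma PhPq p q : in_disk p -> in_disk q -> hyp_dist_one p q ->
  mink (Ph p) (Ph q) = - cosh1 R.
Proof.
move=> hp hq; rewrite /hyp_dist_one => <-.
have sp := sd_gt0 _ hp; have sq := sd_gt0 _ hq.
rewrite sqrtrM; last by rewrite subr_ge0 ltW.
rewrite -/(sd p) -/(sd q) /Ph /mink /=; field.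
by rewrite !gt_eqF.
Qed.

Lemma HL (f g : R * R -> R) (W : R) p (s1 s2 X Y : R * R * R) :
  (forall xi : R * R, in_disk xi -> f xi <= g xi) ->
  (forall (x y : R * R) (l : R), in_disk x -> in_disk y -> 0 <= l -> l <= 1 ->
     l * g x + (1 - l) * g y <= g (l * x.1 + (1 - l) * y.1, l * x.2 + (1 - l) * y.2)) ->
  (forall xi : R * R, in_disk xi -> g xi - f xi <= W * sd xi) ->
  (forall xi : R * R, in_disk xi -> mink (Defs.lift xi) s1 <= f xi) -> mink (Defs.lift p) s1 = f p ->
  (forall xi : R * R, in_disk xi -> mink (Defs.lift xi) s2 <= f xi) ->
  in_disk p -> 0 < X.1.1 -> mink X X < 0 -> 0 < Y.1.1 -> mink Y Y < 0 ->
  add3 X Y = Ph p -> - W <= mink X (sub3 s1 s2).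
Proof.
move=> hfg hconc hw hs1 hs1p hs2 hp hX0 hXX hY0 hYY hXY.
have s0 := sd_gt0 _ hp.
set s := sd p in s0 hXY.
case: X hX0 hXX hXY => [[x0 x1] x2]; case: Y hY0 hYY => [[y0 y1] y2].
rewrite /add3 /Ph /mink /= => hY0 hYY hX0 hXX [e0 e1 e2].
pose l := x0 * s.
pose x := (x1 / x0, x2 / x0); pose y := (y1 / y0, y2 / y0).
have l0 : 0 <= l by rewrite /l; apply: mulr_ge0; apply: ltW.
have l1 : 1 - l = y0 * s.
  rewrite /l -[1](@mulfV _ s) ?gt_eqF // -e0; ring.
have l1' : l <= 1.
  have : 0 <= y0 * s by apply: mulr_ge0; apply: ltW.
  lra.
have xd : in_disk x.
  rewrite /in_disk /sqn /x /=.
  rewrite -(@ltr_pM2r _ (x0 ^+ 2)) ?exprn_gt0 // mul1r.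
  rewrite mulrDl !expr_div_n !mulfVK ?expf_neq0 ?gt_eqF //; rewrite !expr2; lra.
have yd : in_disk y.
  rewrite /in_disk /sqn /y /=.
  rewrite -(@ltr_pM2r _ (y0 ^+ 2)) ?exprn_gt0 // mul1r.
  rewrite mulrDl !expr_div_n !mulfVK ?expf_neq0 ?gt_eqF //; rewrite !expr2; lra.
have pc : p = (l * x.1 + (1 - l) * y.1, l * x.2 + (1 - l) * y.2).
  rewrite l1 /l /x /y /=.
  rewrite [LHS](surjective_pairing p); congr (_, _).
    have -> : p.1 = s * (p.1 / s) by field; rewrite gt_eqF.
    by rewrite -e1; field; rewrite !gt_eqF.
  have -> : p.2 = s * (p.2 / s) by field; rewrite gt_eqF.
  by rewrite -e2; field; rewrite !gt_eqF.
have hc := hconc x y l xd yd l0 l1'.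
rewrite -pc in hc.
have aff : mink (Defs.lift p) s1 = l * mink (Defs.lift x) s1 + (1 - l) * mink (Defs.lift y) s1.
  by rewrite {1}pc /mink /Defs.lift /=; ring.
have hy : mink (Defs.lift y) s1 <= g y by apply: le_trans (hs1 _ yd) (hfg _ yd).
have hx : mink (Defs.lift x) s2 <= g x by apply: le_trans (hs2 _ xd) (hfg _ xd).
have hy' : (1 - l) * mink (Defs.lift y) s1 <= (1 - l) * g y.
  by apply: ler_wpM2l => //; lra.
have hx' : l * mink (Defs.lift x) s2 <= l * g x by apply: ler_wpM2l.
have hwp := hw p hp.
have key : - W * s <= l * (mink (Defs.lift x) s1 - mink (Defs.lift x) s2).
  rewrite -/s in hwp; lra.
have id : l * (mink (Defs.lift x) s1 - mink (Defs.lift x) s2) =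
    s * (- (x0 * (s1.1.1 - s2.1.1)) + x1 * (s1.1.2 - s2.1.2) + x2 * (s1.2 - s2.2)).
  by rewrite /l /x /mink /Defs.lift /=; field; rewrite gt_eqF.
rewrite id in key.
rewrite /sub3 /=.
rewrite -(@ler_pM2l _ s) //; lra.
Qed.
End Alg.
Section Phi.
Variable R : realType.
Implicit Types (phi : R * R -> R) (eta : R * R).

Definition Mn phi eta := [set y : R | exists c b1 b2,
   (forall z, on_circle z -> aff c b1 b2 z <= phi z) /\ y = aff c b1 b2 eta].

Lemma aff_le (c b1 b2 c' b1' b2' : R) :
  (forall z, on_circle z -> aff c b1 b2 z <= aff c' b1' b2' z) ->
  forall eta, sqn eta <= 1 -> aff c b1 b2 eta <= aff c' b1' b2' eta.
Proof.
move=> h [e1 e2]; rewrite /sqn /aff /= => he.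
set k := c' - c; set m1 := b1' - b1; set m2 := b2' - b2.
suff : 0 <= k + m1 * e1 + m2 * e2 by rewrite /k /m1 /m2; lra.
have hz : forall z : R * R, on_circle z -> 0 <= k + m1 * z.1 + m2 * z.2.
  by move=> z /h; rewrite /aff /k /m1 /m2; lra.
set r2 := m1 ^+ 2 + m2 ^+ 2.
have r20 : 0 <= r2 by rewrite /r2; apply: addr_ge0; apply: sqr_ge0.
have [r0|r0] := eqVneq r2 0.
  have m10 : m1 = 0.
    apply/eqP; rewrite -sqrf_eq0 eq_le sqr_ge0 andbT.
    by move: r0; rewrite /r2 => r0; have := sqr_ge0 m2; lra.
  have m20 : m2 = 0.
    apply/eqP; rewrite -sqrf_eq0 eq_le sqr_ge0 andbT.
    by move: r0; rewrite /r2 => r0; have := sqr_ge0 m1; lra.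
  have := hz (1, 0); rewrite /on_circle /sqn /= m10 m20.
  rewrite expr1n expr0n /= addr0 => /(_ erefl); lra.
have rp : 0 < r2 by rewrite lt_neqAle eq_sym r0.
set r := Num.sqrt r2.
have rr : r ^+ 2 = r2 by rewrite sqr_sqrtr.
have r0' : 0 < r by rewrite sqrtr_gt0.
have oc : on_circle (- m1 / r, - m2 / r).
  by rewrite /on_circle /sqn /= !expr_div_n !sqrrN -mulrDl rr divff // gt_eqF.
have := hz _ oc; rewrite /=.
have e : m1 * (- m1 / r) + m2 * (- m2 / r) = - (r ^+ 2 / r).
  by rewrite rr /r2; clearbody r; field; rewrite gt_eqF.
rewrite -addrA e expr2 mulfK ?gt_eqF //.
move=> hk.
have cs : (m1 * e1 + m2 * e2) ^+ 2 <= r2 * (e1 ^+ 2 + e2 ^+ 2).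
  have := sqr_ge0 (m1 * e2 - m2 * e1); rewrite /r2 !expr2 => q; nra.
have cs2 : (m1 * e1 + m2 * e2) ^+ 2 <= r ^+ 2.
  apply: le_trans cs _; rewrite rr; rewrite -[X in _ <= X]mulr1.
  by apply: ler_wpM2l.
have : - r <= m1 * e1 + m2 * e2.
  move: cs2; rewrite !expr2 => cs2; nra.
lra.
Qed.

Section Bnd.
Variables (phi : R * R -> R) (B : R).
Hypothesis hB : forall z, on_circle z -> `|phi z| <= B.

Lemma Mn_ne eta : Mn phi eta !=set0.
Proof.
exists (aff (- B) 0 0 eta), (- B), 0, 0; split => // z /hB.
rewrite /aff !mul0r !addr0 => h; have := ler_norm (phi z).
rewrite ler_norml in h; case/andP: h; lra.
Qed.

Lemma Mn_ub eta : sqn eta <= 1 -> ubound (Mn phi eta) B.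
Proof.
move=> he y [c [b1 [b2 [hc ->]]]].
have h : forall z, on_circle z -> aff c b1 b2 z <= aff B 0 0 z.
  move=> z hz; apply: le_trans (hc z hz) _; have := hB z hz; rewrite ler_norml /aff.
  rewrite !mul0r !addr0; case/andP; lra.
have := @aff_le c b1 b2 B 0 0 h eta he; rewrite {2}/aff !mul0r !addr0 //.
Qed.

Lemma Mn_sup eta : sqn eta <= 1 -> has_sup (Mn phi eta).
Proof. by move=> he; split; [exact: Mn_ne | exists B; exact: Mn_ub]. Qed.

Lemma minus_ge c b1 b2 eta : sqn eta <= 1 ->
  (forall z, on_circle z -> aff c b1 b2 z <= phi z) -> aff c b1 b2 eta <= phi_minus phi eta.
Proof.
move=> he hc; apply: sup_upper_bound; first exact: Mn_sup.
by exists c, b1, b2.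
Qed.

Lemma minus_convex (x y : R * R) (l : R) : sqn x <= 1 -> sqn y <= 1 -> 0 <= l -> l <= 1 ->
  phi_minus phi (l * x.1 + (1 - l) * y.1, l * x.2 + (1 - l) * y.2)
    <= l * phi_minus phi x + (1 - l) * phi_minus phi y.
Proof.
move=> hx hy l0 l1; apply: ge_sup; first exact: Mn_ne.
move=> _ [c [b1 [b2 [hc ->]]]].
have e : aff c b1 b2 (l * x.1 + (1 - l) * y.1, l * x.2 + (1 - l) * y.2)
   = l * aff c b1 b2 x + (1 - l) * aff c b1 b2 y by rewrite /aff /=; ring.
rewrite e; apply: lerD; apply: ler_wpM2l; rewrite ?subr_ge0 //; exact: minus_ge.
Qed.
End Bnd.

Lemma minus_sum phi B eta : (forall z, on_circle z -> `|phi z| <= B) -> sqn eta <= 1 ->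
  phi_minus phi eta + phi_minus (fun z => - phi z) eta <= 0.
Proof.
move=> hB he.
have hB' : forall z, on_circle z -> `|(fun z => - phi z) z| <= B.
  by move=> z hz /=; rewrite normrN hB.
suff : phi_minus (fun z => - phi z) eta <= - phi_minus phi eta by lra.
apply: ge_sup; first exact: (Mn_ne _ _ hB').
move=> _ [c [b1 [b2 [hc ->]]]].
suff : phi_minus phi eta <= aff (- c) (- b1) (- b2) eta by rewrite /aff; lra.
apply: ge_sup; first exact: (Mn_ne _ _ hB).
move=> _ [c' [b1' [b2' [hc' ->]]]].
apply: aff_le => // z hz; have := hc z hz; have := hc' z hz; rewrite /aff; lra.
Qed.

Lemma plus_eq phi eta : phi_plus phi eta = - phi_minus (fun z => - phi z) eta.
Proof.
rewrite /phi_plus /inf /phi_minus; congr (- sup _).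
apply/seteqP; split => y.
  move=> [_ [c [b1 [b2 [hc ->]]]] <-].
  exists (- c), (- b1), (- b2); split; last by rewrite /aff; ring.
  by move=> z hz; have := hc z hz; rewrite /aff; lra.
move=> [c [b1 [b2 [hc ->]]]].
exists (aff (- c) (- b1) (- b2) eta); last by rewrite /aff; ring.
exists (- c), (- b1), (- b2); split => // z hz; have := hc z hz; rewrite /aff; lra.
Qed.

End Phi.
Section Cpt.
Variable R : realType.

Lemma cont_lin3 (a b : R) : continuous (fun v : R * R * R => v.1.1 + v.1.2 * a + v.2 * b).
Proof.
move=> v.
have f11 : (fun v : R * R * R => v.1.1) @ v --> v.1.1.
  apply: (continuous_comp (f := fst) (g := fst)); [exact: cvg_fst | exact: cvg_fst].
have f12 : (fun v : R * R * R => v.1.2) @ v --> v.1.2.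
  apply: (continuous_comp (f := fst) (g := snd)); [exact: cvg_fst | exact: cvg_snd].
have f2 : (fun v : R * R * R => v.2) @ v --> v.2 by exact: cvg_snd.
apply: cvgD; first apply: cvgD => //.
  by apply: cvgMl.
by apply: cvgMl.
Qed.

Lemma sqn_cont : continuous (@sqn R).
Proof.
have -> : @sqn R = fun v => v.1 * v.1 + v.2 * v.2.
  by apply: funext => w; rewrite /sqn !expr2.
move=> v.
have f1 : (fun v : R * R => v.1) @ v --> v.1 by exact: cvg_fst.
have f2 : (fun v : R * R => v.2) @ v --> v.2 by exact: cvg_snd.
by apply: cvgD; apply: cvgM.
Qed.

Lemma circle_compact : compact [set z : R * R | on_circle z].
Proof.
have hB : compact (`[(-1 : R), 1] `*` `[(-1 : R), 1]).
  by apply: compact_setX; exact: segment_compact.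
apply: (subclosed_compact _ hB).
  have : closed (@sqn R @^-1` [set x | x = 1]).
    by apply: preimage_closed; [move=> x _; exact: sqn_cont | exact: closed_eq].
  by [].
move=> [z1 z2]; rewrite /on_circle /sqn /= => h.
have a1 := sqr_ge0 z1; have a2 := sqr_ge0 z2.
split; rewrite /= in_itv /=; apply/andP; rewrite !expr2 in h a1 a2; split; nra.
Qed.

Lemma phi_bounded (phi : R * R -> R) : {within [set z | on_circle z], continuous phi} ->
  exists B, forall z, on_circle z -> `|phi z| <= B.
Proof.
move=> hc.
have ne : [set z : R * R | on_circle z] !=set0.
  by exists (1, 0); rewrite /on_circle /sqn /= expr1n expr0n addr0.
have [c1 c1A h1] := compact_EVT_max ne circle_compact hc.
have [c2 c2A h2] := compact_EVT_min ne circle_compact hc.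
exists (`|phi c1| + `|phi c2|) => z hz.
have zA : z \in [set z : R * R | on_circle z] by rewrite inE.
have := h1 z zA; have := h2 z zA.
rewrite ler_norml => a b; apply/andP; split.
  have := ler_norm (phi c1); have := ler_norm (- phi c2); rewrite normrN. have := normr_ge0 (phi c1). lra.
have := ler_norm (phi c1); have := ler_norm (phi c2); have := normr_ge0 (phi c2). lra.
Qed.
End Cpt.
Section Sig.
Variable R : realType.

Lemma sigma_exists (phi : R * R -> R) (B : R) (p : R * R) :
  (forall z, on_circle z -> `|phi z| <= B) -> in_disk p ->
  exists s, Sigma false phi p s.
Proof.
move=> hB hp.
have B0 : 0 <= B.
  have := hB (1, 0); rewrite /on_circle /sqn /= expr1n expr0n addr0 => /(_ erefl).
  by apply: le_trans.
pose m := - B.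
pose G (z : R * R) (v : R * R * R) := aff v.1.1 v.1.2 v.2 z.
have Gc : forall z, continuous (G z) by move=> z; exact: cont_lin3.
pose K := [set v : R * R * R | (forall z, on_circle z -> G z v <= phi z) /\ m <= G p v].
have cK : closed K.
  have -> : K = \bigcap_(z in [set z | on_circle z]) (G z @^-1` [set x | x <= phi z])
               `&` (G p @^-1` [set x | m <= x]).
    by apply/seteqP; split => v /=; [move=> [h1 h2]; split => // z /h1 | move=> [h1 h2]; split => // z /h1].
  apply: closedI.
    apply: closed_bigI => z _; apply: preimage_closed; last exact: closed_le.
    by move=> x _; exact: Gc.
  apply: preimage_closed; last exact: closed_ge.
  by move=> x _; exact: Gc.
set rho := Num.sqrt (sqn p).
have rho0 : 0 <= rho := sqrtr_ge0 _.
have rho1 : rho < 1.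
  by rewrite /rho -sqrtr1 ltr_sqrt ?ltr01 //; exact: hp.
have rr : rho ^+ 2 = sqn p by rewrite sqr_sqrtr // /sqn addr_ge0 // sqr_ge0.
set D := 2 * B / (1 - rho).
have D1 : D * (1 - rho) = 2 * B by rewrite /D mulfVK // gt_eqF // subr_gt0.
pose M := B + D.
have hBox : compact ((`[- M, M] `*` `[- M, M]) `*` `[- M, M]).
  by apply: compact_setX; [apply: compact_setX|]; exact: segment_compact.
have sub : K `<=` (`[- M, M] `*` `[- M, M]) `*` `[- M, M].
  move=> [[c b1] b2] [hz hm].
  rewrite /G /aff /= in hz hm.
  set r := Num.sqrt (b1 ^+ 2 + b2 ^+ 2).
  have r0 : 0 <= r := sqrtr_ge0 _.
  have rr' : r ^+ 2 = b1 ^+ 2 + b2 ^+ 2 by rewrite sqr_sqrtr // addr_ge0 // sqr_ge0.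
  have cr : c + r <= B.
    have [rz|rp] := eqVneq r 0.
      have bb : b1 ^+ 2 + b2 ^+ 2 = 0 by rewrite -rr' rz expr0n.
      have b10 : b1 = 0.
        apply/eqP; rewrite -sqrf_eq0 eq_le sqr_ge0 andbT; have := sqr_ge0 b2; lra.
      have := hz (1, 0); rewrite /on_circle /sqn /= expr1n expr0n addr0 => /(_ erefl).
      have := hB (1, 0); rewrite /on_circle /sqn /= expr1n expr0n addr0 => /(_ erefl).
      rewrite rz b10 ler_norml => /andP [_ h] h'; lra.
    have rp' : 0 < r by rewrite lt_neqAle eq_sym rp.
    have oc : on_circle (b1 / r, b2 / r).
      by rewrite /on_circle /sqn /= !expr_div_n -mulrDl -rr' divff // expf_neq0.
    have := hz _ oc; have := hB _ oc; rewrite ler_norml => /andP [_ h] /=.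
    have -> : c + b1 * (b1 / r) + b2 * (b2 / r) = c + r.
      have e : b1 * (b1 / r) + b2 * (b2 / r) = r ^+ 2 / r.
        by rewrite rr'; clearbody r; field; rewrite gt_eqF.
      by rewrite -addrA e expr2 mulfK // gt_eqF.
    lra.
  have bp : b1 * p.1 + b2 * p.2 <= r * rho.
    have cs : (b1 * p.1 + b2 * p.2) ^+ 2 <= (r * rho) ^+ 2.
      rewrite exprMn rr' rr /sqn.
      have := sqr_ge0 (b1 * p.2 - b2 * p.1); rewrite !expr2 => q; nra.
    have rr0 : 0 <= r * rho by apply: mulr_ge0.
    case: (lerP (b1 * p.1 + b2 * p.2) 0) => h; first lra.
    rewrite !expr2 in cs; nra.
  have hrD : r <= D.
    have : r * (1 - rho) <= D * (1 - rho) by rewrite D1 /m in hm *; nra.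
    by rewrite ler_pM2r // subr_gt0.
  have b1s : b1 * b1 <= r * r by rewrite -!expr2 rr'; have := sqr_ge0 b2; lra.
  have b2s : b2 * b2 <= r * r by rewrite -!expr2 rr'; have := sqr_ge0 b1; lra.
  have b11 : - r <= b1 by nra.
  have b12 : b1 <= r by nra.
  have b21 : - r <= b2 by nra.
  have b22 : b2 <= r by nra.
  have rrho : r * rho <= r by rewrite -[X in _ <= X]mulr1; apply: ler_wpM2l => //; exact: ltW.
  have D0 : 0 <= D by lra.
  rewrite /M /m in hm *.
  split; [split|]; rewrite /= in_itv /=; apply/andP; split; lra.
have cptK : compact K := subclosed_compact cK hBox sub.
have neK : K !=set0.
  exists (- B, 0, 0); split.
    move=> z hz; rewrite /G /aff /= !mul0r !addr0.
    by have := hB z hz; rewrite ler_norml => /andP [h _].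
  by rewrite /m /G /aff /= !mul0r !addr0.
have [v vK vmax] := compact_EVT_max neK cptK (continuous_subspaceT (Gc p)).
rewrite inE in vK; case: vK => vK1 vK2.
exists (- v.1.1, v.1.2, v.2).
have mk : forall xi : R * R, mink (Defs.lift xi) (- v.1.1, v.1.2, v.2) = G xi v.
  by move=> xi; rewrite /mink /Defs.lift /G /aff /=; ring.
split.
  move=> xi hxi; rewrite mk; apply: minus_ge hB _ _ _ _ _ _ => //; exact: ltW.
rewrite mk /=; apply/eqP; rewrite eq_le; apply/andP; split.
  by apply: minus_ge hB _ _ _ _ _ _ => //; exact: ltW.
apply: ge_sup; first exact: (@Mn_ne R phi B hB p).
move=> _ [c [b1 [b2 [hc ->]]]].
case: (lerP m (aff c b1 b2 p)) => h; last lra.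
by apply: (vmax (c, b1, b2)); rewrite inE; split.
Qed.
End Sig.

Section Final.
Variable R : realType.

Lemma core_abs (f g : R * R -> R) (W : R) (p q : R * R) (s1 s2 : R * R * R) :
  0 <= W ->
  (forall xi : R * R, in_disk xi -> f xi <= g xi) ->
  (forall (x y : R * R) (l : R), in_disk x -> in_disk y -> 0 <= l -> l <= 1 ->
     l * g x + (1 - l) * g y <= g (l * x.1 + (1 - l) * y.1, l * x.2 + (1 - l) * y.2)) ->
  (forall xi : R * R, in_disk xi -> g xi - f xi <= W * sd R xi) ->
  (forall xi : R * R, in_disk xi -> mink (Defs.lift xi) s1 <= f xi) -> mink (Defs.lift p) s1 = f p ->
  (forall xi : R * R, in_disk xi -> mink (Defs.lift xi) s2 <= f xi) -> mink (Defs.lift q) s2 = f q ->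
  in_disk p -> in_disk q -> hyp_dist_one p q ->
  Num.sqrt (mink (sub3 s1 s2) (sub3 s1 s2)) <= 2 * Num.sqrt 2 / (1 - tanh1 R) * W.
Proof.
move=> hW hfg hconc hw hs1 hs1p hs2 hs2q hp hq hd.
apply: le_trans (_ : 43/6 * W <= _); last first.
  by apply: ler_wpM2r => //; exact: (K_ge R).
apply: (final_alg R W (cosh1 R) (Ph R p) (Ph R q)).
- exact: (cosh1_le R).
- exact: hW.
- exact: Ph0.
- exact: Ph0.
- exact: PhPh.
- exact: PhPh.
- exact: PhPq.
- move=> X Y hX0 hXX hY0 hYY hXY.
  exact: (HL R f g W p s1 s2 X Y hfg hconc hw hs1 hs1p hs2 hp hX0 hXX hY0 hYY hXY).
- move=> X Y hX0 hXX hY0 hYY hXY.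
  have := HL R f g W q s2 s1 X Y hfg hconc hw hs2 hs2q hs1 hq hX0 hXX hY0 hYY hXY.
  have -> : mink X (sub3 s2 s1) = - mink X (sub3 s1 s2) by rewrite /mink /sub3 /=; ring.
  lra.
Qed.

Lemma lin0 (p q : R * R) : lin p q 0 = p.
Proof. by rewrite /lin subr0 !mul1r !mul0r !addr0; case: p. Qed.
Lemma lin1 (p q : R * R) : lin p q 1 = q.
Proof. by rewrite /lin subrr !mul1r !mul0r !add0r; case: q. Qed.

Lemma em_bound pm (phi : R * R -> R) (p q : R * R) (s1 s2 : R * R * R) :
  Defs.Sigma pm phi p s1 -> Defs.Sigma pm phi q s2 ->
  (Defs.eq_measure pm phi (lin p q) <= (Num.sqrt (mink (sub3 s1 s2) (sub3 s1 s2)))%:E)%E.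
Proof.
move=> h1 h2; apply: ereal_inf_lbound.
exists 1%N, (fun i : nat => i%:R), (fun i : nat => if i == 0%N then s1 else s2); split => //.
- by move=> i; rewrite ltnS leqn0 => /eqP -> /=; rewrite ltr01.
- move=> i; rewrite leq_eqVlt ltnS leqn0 => /orP [] /eqP -> /=.
    by rewrite lin1.
  by rewrite lin0.
- by rewrite big_ord1.
Qed.

Lemma core_phi (psi : R * R -> R) (B W : R) (p q : R * R) (s1 s2 : R * R * R) :
  (forall z, on_circle z -> `|psi z| <= B) -> 0 <= W ->
  (forall eta, in_disk eta ->
     - phi_minus (fun z => - psi z) eta - phi_minus psi eta <= W * sd R eta) ->
  in_disk p -> in_disk q -> hyp_dist_one p q ->
  Defs.Sigma false psi p s1 -> Defs.Sigma false psi q s2 ->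
  Num.sqrt (mink (sub3 s1 s2) (sub3 s1 s2)) <= 2 * Num.sqrt 2 / (1 - tanh1 R) * W.
Proof.
move=> hB hW hw hp hq hd [a1 b1] [a2 b2].
have hB' : forall z, on_circle z -> `|(fun z => - psi z) z| <= B.
  by move=> z hz /=; rewrite normrN hB.
apply: (core_abs (phi_minus psi) (fun z => - phi_minus (fun z => - psi z) z) W p q s1 s2) => //.
- move=> xi hxi; have := minus_sum R psi B xi hB (ltW hxi); lra.
- move=> x y l hx hy l0 l1.
  have := minus_convex R (fun z => - psi z) B hB' x y l (ltW hx) (ltW hy) l0 l1.
  lra.
Qed.
End Final.

Theorem proposition6p3 (R : realType) (phi : R * R -> R) :
  {within [set z | on_circle z], continuous phi} ->
  (width phi < +oo)%E ->
  forall pm : bool,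
    (thurston_norm pm phi
       <= ((2 * Num.sqrt 2 / (1 - tanh1 R)))%:E * width phi)%E.
Proof.
move=> hc hw pm.
have [B hB] := phi_bounded R phi hc.
have hB' : forall z, on_circle z -> `|(fun z => - phi z) z| <= B.
  by move=> z hz /=; rewrite normrN hB.
have gap : forall eta, in_disk eta -> 0 <= phi_plus phi eta - phi_minus phi eta.
  move=> eta he; rewrite (plus_eq R phi eta).
  have := minus_sum R phi B eta hB (ltW he); lra.
have d0 : in_disk ((0:R), (0:R)).
  by rewrite /in_disk /sqn /= expr0n addr0 ltr01.
have w0 : (0 <= width phi)%E.
  rewrite /width; apply: le_ereal_sup_tmp.
  exists (((phi_plus phi (0, 0) - phi_minus phi (0, 0)) / Num.sqrt (1 - sqn ((0:R), (0:R))))%:E);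
    first by exists (0, 0).
  rewrite lee_fin; apply: divr_ge0; [exact: gap | exact: sqrtr_ge0].
case E : (width phi) w0 hw => [W| |] //= w0 _.
have W0 : 0 <= W by rewrite -lee_fin.
have hwid : forall eta, in_disk eta -> phi_plus phi eta - phi_minus phi eta <= W * sd R eta.
  move=> eta he.
  have : (((phi_plus phi eta - phi_minus phi eta) / Num.sqrt (1 - sqn eta))%:E <= width phi)%E.
    by apply: ereal_sup_ubound; exists eta.
  rewrite E lee_fin ler_pdivrMr; first by [].
  exact: (sd_gt0 R eta he).
rewrite -EFinM; apply: ge_ereal_sup => _ [p [q [hp hq hd _ ->]]].
case: pm.
- have [s1 hs1] := sigma_exists R (fun z => - phi z) B p hB' hp.
  have [s2 hs2] := sigma_exists R (fun z => - phi z) B q hB' hq.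
  pose n3 (s : R * R * R) : R * R * R := (- s.1.1, - s.1.2, - s.2).
  have hS : forall r s, Sigma false (fun z => - phi z) r s -> Sigma true phi r (n3 s).
    move=> r s [h1 h2]; split.
      move=> xi hxi; rewrite (plus_eq R phi xi); have := h1 xi hxi.
      by rewrite /mink /Defs.lift /n3 /=; lra.
    move: h2; rewrite /= (plus_eq R phi r) /mink /Defs.lift /n3 /= => h2; lra.
  apply: le_trans (em_bound R true phi p q (n3 s1) (n3 s2) (hS _ _ hs1) (hS _ _ hs2)) _.
  rewrite lee_fin.
  have -> : mink (sub3 (n3 s1) (n3 s2)) (sub3 (n3 s1) (n3 s2)) = mink (sub3 s1 s2) (sub3 s1 s2).
    by rewrite /mink /sub3 /n3 /=; ring.
  apply: (core_phi R (fun z => - phi z) B W p q s1 s2 hB' W0 _ hp hq hd hs1 hs2).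
  move=> eta he.
  have -> : phi_minus (fun z => - (fun z => - phi z) z) eta = phi_minus phi eta.
    by congr phi_minus; apply: funext => z /=; rewrite opprK.
  have := hwid eta he; rewrite (plus_eq R phi eta); lra.
- have [s1 hs1] := sigma_exists R phi B p hB hp.
  have [s2 hs2] := sigma_exists R phi B q hB hq.
  apply: le_trans (em_bound R false phi p q s1 s2 hs1 hs2) _.
  rewrite lee_fin.
  apply: (core_phi R phi B W p q s1 s2 hB W0 _ hp hq hd hs1 hs2).
  move=> eta he; have := hwid eta he; rewrite (plus_eq R phi eta); lra.
Qed.
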